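(* Assume that $Q$ spans $E$ as a vector space, that $f$ is surjective, and that $R\cap f^{-1}(C)$ and $f^{-1}(C)$ span the same vector subspace of $E$. Then there exist $y_0\in\mathbb{R}^n$ and $c\in\mathbb{R}$ such that for every $y\in f(R)+C$: $$b_{Q,f,\ell,C}(y-y_0)-c\;\le\;b'_{Q,R,f,\ell,C}(y)\;\le\;b_{Q,f,\ell,C}(y),$$ with the conventions $-\infty-c=-\infty$, $+\infty-c=+\infty$.
   Context: $E$ is a finite-dimensional Euclidean space, $Q\subset E$ a convex cone (nonempty, stable under addition and multiplication by nonnegative reals), $f:E\to\mathbb{R}^n$ a linear map, $\ell:E\to\mathbb{R}$ a linear form, $C\subset\mathbb{R}^n$ a convex cone, and $R\subset E$ a lattice (an additive subgroup generated by a basis of $E$). Define $b_{Q,f,\ell,C}(y)=\sup\{\ell(x):x\in Q,\ y-f(x)\in C\}$ and $b'_{Q,R,f,\ell,C}(y)=\sup\{\ell(x):x\in Q\cap R,\ y-f(x)\in C\}$ for $y\in\mathbb{R}^n$, with $\sup\emptyset=-\infty$ and the supremum of an unbounded set equal to $+\infty$. $f(R)+C=\{f(r)+c:r\in R,c\in C\}$. *)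

(* Defs.v *)
From Stdlib Require Import Reals List ClassicalEpsilon.
Open Scope R_scope.

Definition idx (d : nat) := { i : nat | (i < d)%nat }.
Definition vec (d : nat) := idx d -> R.

Definition vzero {d} : vec d := fun _ => 0.
Definition vadd {d} (x y : vec d) : vec d := fun i => x i + y i.
Definition vscale {d} (a : R) (x : vec d) : vec d := fun i => a * x i.
Definition vsub {d} (x y : vec d) : vec d := fun i => x i - y i.

Definition is_linear {d m} (f : vec d -> vec m) : Prop :=
  (forall x y, f (vadd x y) = vadd (f x) (f y)) /\
  (forall a x, f (vscale a x) = vscale a (f x)).
Definition is_linear_form {d} (l : vec d -> R) : Prop :=
  (forall x y, l (vadd x y) = l x + l y) /\
  (forall a x, l (vscale a x) = a * l x).

Definition convex_cone {d} (K : vec d -> Prop) : Prop :=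
  (exists x, K x) /\
  (forall x y, K x -> K y -> K (vadd x y)) /\
  (forall a x, 0 <= a -> K x -> K (vscale a x)).

Definition lincomb {d} (l : list (R * vec d)) : vec d :=
  fold_right (fun p acc => vadd (vscale (fst p) (snd p)) acc) vzero l.
Definition span {d} (S : vec d -> Prop) (v : vec d) : Prop :=
  exists l : list (R * vec d), Forall (fun p => S (snd p)) l /\ v = lincomb l.

Definition vsum_nat {d} (n : nat) (g : nat -> vec d) : vec d :=
  fold_right (fun i acc => vadd (g i) acc) vzero (seq 0 n).

(* b : nat -> vec d (first d entries) is a basis of R^d. *)
Definition is_basis {d} (b : nat -> vec d) : Prop :=
  (forall c : nat -> R,
      vsum_nat d (fun i => vscale (c i) (b i)) = vzero ->
      forall i, (i < d)%nat -> c i = 0) /\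
  (forall v : vec d, exists c : nat -> R, v = vsum_nat d (fun i => vscale (c i) (b i))).

Definition is_lattice {d} (L : vec d -> Prop) : Prop :=
  exists b : nat -> vec d, is_basis b /\
    forall v, L v <-> exists z : nat -> Z, v = vsum_nat d (fun i => vscale (IZR (z i)) (b i)).

Inductive ereal := MInf | Fin (x : R) | PInf.

Definition ereal_le (a b : ereal) : Prop :=
  match a, b with
  | MInf, _ => True
  | _, PInf => True
  | Fin x, Fin y => x <= y
  | _, _ => False
  end.

Definition ereal_sub_R (a : ereal) (c : R) : ereal :=
  match a with Fin x => Fin (x - c) | e => e end.

Definition esup (S : R -> Prop) : ereal :=
  match excluded_middle_informative (exists x, S x) with
  | right _ => MInf
  | left Hne =>
      match excluded_middle_informative (bound S) with
      | right _ => PInf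
      | left Hb => Fin (proj1_sig (completeness S Hb Hne))
      end
  end.

Definition bval {d n} (Q : vec d -> Prop) (f : vec d -> vec n) (l : vec d -> R)
  (C : vec n -> Prop) (y : vec n) : ereal :=
  esup (fun r => exists x, Q x /\ C (vsub y (f x)) /\ r = l x).

Definition bval' {d n} (Q L : vec d -> Prop) (f : vec d -> vec n) (l : vec d -> R)
  (C : vec n -> Prop) (y : vec n) : ereal :=
  esup (fun r => exists x, Q x /\ L x /\ C (vsub y (f x)) /\ r = l x).

(* Main.v *)
Require Import Defs.
From Stdlib Require Import Reals List ClassicalEpsilon.
From Stdlib Require Import Lra Lia Classical FunctionalExtensionality ProofIrrelevance.
Open Scope R_scope.

Ltac vext := apply functional_extensionality; intro; unfold vadd, vsub, vscale, vzero; simpl;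
  first [ring | lra | nra].

Lemma lincomb_app {d} (l1 l2 : list (R * vec d)) :
  lincomb (l1 ++ l2) = vadd (lincomb l1) (lincomb l2).
Proof.
  unfold lincomb. induction l1 as [|[a v] l1 IH]; simpl.
  - vext.
  - rewrite IH. vext.
Qed.

Lemma span_zero {d} (S : vec d -> Prop) : span S vzero.
Proof. exists nil. split; [constructor|reflexivity]. Qed.

Lemma span_in {d} (S : vec d -> Prop) x : S x -> span S x.
Proof.
  intros Hx. exists ((1, x) :: nil). split.
  - constructor; [simpl; auto|constructor].
  - unfold lincomb; simpl. vext.
Qed.

Lemma span_add {d} (S : vec d -> Prop) u v : span S u -> span S v -> span S (vadd u v).
Proof.
  intros [l1 [F1 ->]] [l2 [F2 ->]]. exists (l1 ++ l2). split.
  - apply Forall_app; auto.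
  - rewrite lincomb_app; reflexivity.
Qed.

Lemma span_scale {d} (S : vec d -> Prop) a u : span S u -> span S (vscale a u).
Proof.
  intros [l1 [F1 ->]]. exists (map (fun p => (a * fst p, snd p)) l1). split.
  - induction F1; simpl; constructor; auto.
  - unfold lincomb. induction l1 as [|[b v] l1 IH]; simpl.
    + vext.
    + inversion F1; subst. rewrite <- IH by auto. vext.
Qed.

Lemma span_trans {d} (S T : vec d -> Prop) v :
  (forall x, S x -> span T x) -> span S v -> span T v.
Proof.
  intros H [l [F ->]]. induction F as [|[a x] l Hx F IH]; unfold lincomb in *; simpl.
  - apply span_zero.
  - apply span_add; [apply span_scale; apply H; exact Hx| exact IH].
Qed.

Lemma span_nil {d} (p : vec d) : span (fun y => In y nil) p -> p = vzero.
Proof.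
  intros [l [F ->]]. destruct l as [|[a x] l]; [reflexivity|].
  inversion F as [|? ? Hx]; simpl in Hx; contradiction.
Qed.

Lemma span_cons_dec {d} (s : vec d) ls p : span (fun y => In y (s :: ls)) p ->
  exists a p', span (fun y => In y ls) p' /\ p = vadd (vscale a s) p'.
Proof.
  intros [l [F ->]]. induction F as [|[b t] l Ht F IH].
  - exists 0, vzero. split; [apply span_zero| unfold lincomb; simpl; vext].
  - destruct IH as [a [p' [Hp' Heq]]]. unfold lincomb in *; simpl in *. rewrite Heq.
    destruct Ht as [Ht|Ht].
    + subst t. exists (b + a), p'. split; auto. vext.
    + exists a, (vadd (vscale b t) p'). split.
      * apply span_add; [apply span_scale, span_in; exact Ht| exact Hp'].
      * vext.
Qed.

Lemma cone_zero {d} (K : vec d -> Prop) : convex_cone K -> K vzero.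
Proof.
  intros [[x Hx] [_ Hs]]. replace vzero with (vscale 0 x) by vext. apply Hs; auto; lra.
Qed.

Lemma span_cone_dec {d} (Q : vec d -> Prop) v : convex_cone Q -> span Q v ->
  exists P N, Q P /\ Q N /\ v = vsub P N.
Proof.
  intros HQ. pose proof (cone_zero Q HQ) as Q0. destruct HQ as [_ [Hadd Hsc]].
  intros [l [F ->]]. induction F as [|[a q] l Hq F IH]; unfold lincomb in *; simpl in *.
  - exists vzero, vzero. split; auto. split; auto. vext.
  - destruct IH as [P [N [HP [HN Heq]]]]. rewrite Heq. destruct (Rle_dec 0 a).
    + exists (vadd (vscale a q) P), N. split; [apply Hadd; auto|split; auto; vext].
    + exists P, (vadd (vscale (-a) q) N). split; auto. split.
      * apply Hadd; auto. apply Hsc; auto; lra.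
      * vext.
Qed.

Lemma lin_zero {d m} (f : vec d -> vec m) : is_linear f -> f vzero = vzero.
Proof.
  intros [Ha Hs]. replace (@vzero d) with (vscale 0 (@vzero d)) by vext.
  rewrite Hs. vext.
Qed.

Lemma lin_sub {d m} (f : vec d -> vec m) x y : is_linear f -> f (vsub x y) = vsub (f x) (f y).
Proof.
  intros [Ha Hs]. replace (vsub x y) with (vadd x (vscale (-1) y)) by vext.
  rewrite Ha, Hs. vext.
Qed.

Lemma linf_zero {d} (l : vec d -> R) : is_linear_form l -> l vzero = 0.
Proof.
  intros [Ha Hs]. replace (@vzero d) with (vscale 0 (@vzero d)) by vext.
  rewrite Hs. ring.
Qed.

Lemma linf_sub {d} (l : vec d -> R) x y : is_linear_form l -> l (vsub x y) = l x - l y.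
Proof.
  intros [Ha Hs]. replace (vsub x y) with (vadd x (vscale (-1) y)) by vext.
  rewrite Ha, Hs. ring.
Qed.

Lemma fold_add {d} (ns : list nat) (g h : nat -> vec d) :
  fold_right (fun i acc => vadd (vadd (g i) (h i)) acc) vzero ns =
  vadd (fold_right (fun i acc => vadd (g i) acc) vzero ns)
       (fold_right (fun i acc => vadd (h i) acc) vzero ns).
Proof. induction ns as [|i ns IH]; simpl; [vext| rewrite IH; vext]. Qed.

Lemma fold_scale {d} (ns : list nat) a (g : nat -> vec d) :
  fold_right (fun i acc => vadd (vscale a (g i)) acc) vzero ns =
  vscale a (fold_right (fun i acc => vadd (g i) acc) vzero ns).
Proof. induction ns as [|i ns IH]; simpl; [vext| rewrite IH; vext]. Qed.

Lemma lat_add {d} (L : vec d -> Prop) u v : is_lattice L -> L u -> L v -> L (vadd u v).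
Proof.
  intros [b [_ HLb]] Hu Hv. apply HLb in Hu as [zu Hu]. apply HLb in Hv as [zv Hv].
  apply HLb. exists (fun i => (zu i + zv i)%Z). subst u v. unfold vsum_nat.
  rewrite <- fold_add. f_equal. extensionality i. extensionality acc.
  rewrite plus_IZR. vext.
Qed.

Lemma lat_scale {d} (L : vec d -> Prop) (m : Z) u : is_lattice L -> L u -> L (vscale (IZR m) u).
Proof.
  intros [b [_ HLb]] Hu. apply HLb in Hu as [zu Hu].
  apply HLb. exists (fun i => (m * zu i)%Z). subst u. unfold vsum_nat.
  rewrite <- fold_scale. f_equal. extensionality i. extensionality acc.
  rewrite mult_IZR. vext.
Qed.

Lemma lat_zero {d} (L : vec d -> Prop) : is_lattice L -> L vzero.
Proof.
  intros [b [_ HLb]]. apply HLb. exists (fun _ => 0%Z). unfold vsum_nat.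
  generalize (seq 0 d). intros ns. induction ns as [|i ns IH]; simpl; [reflexivity|].
  rewrite <- IH. vext.
Qed.

Lemma lift_list {d} (S : vec d -> Prop) (s0 : vec d) : forall ls',
  (forall e, In e ls' -> exists s a, S s /\ e = vsub s (vscale a s0)) ->
  exists ls'', (forall x, In x ls'' -> S x) /\
    forall e, In e ls' -> span (fun y => In y (s0 :: ls'')) e.
Proof.
  induction ls' as [|e ls' IH]; intros H.
  - exists nil. split; [intros x []| intros e []].
  - destruct IH as [ls'' [H1 H2]]. { intros e' He'. apply H. right; auto. }
    destruct (H e (or_introl eq_refl)) as [s [a [Ss ->]]].
    exists (s :: ls''). split.
    + intros x [<-|Hx]; auto.
    + intros e' [<-|He'].
      * replace (vsub s (vscale a s0)) with (vadd s (vscale (-a) s0)) by vext.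
        apply span_add; [apply span_in | apply span_scale; apply span_in]; simpl; auto.
      * apply (span_trans (fun y => In y (s0 :: ls''))); [|auto].
        intros x Hx. apply span_in. simpl in *. tauto.
Qed.

Lemma fin_span d : forall d0, (d0 <= d)%nat -> forall S : vec d -> Prop,
  (forall s, S s -> forall i : idx d, (d0 <= proj1_sig i)%nat -> s i = 0) ->
  exists ls, (forall x, In x ls -> S x) /\ forall x, S x -> span (fun y => In y ls) x.
Proof.
  induction d0 as [|d0 IH]; intros Hd S HS.
  - exists nil. split; [intros x []|]. intros x Hx.
    replace x with (@vzero d). apply span_zero.
    apply functional_extensionality; intro i. symmetry; apply (HS x Hx); lia.
  - destruct (classic (exists s0 i0, S s0 /\ proj1_sig i0 = d0 /\ s0 i0 <> 0))
      as [[s0 [i0 [Ss0 [Hi0 Hnz]]]]|Hno].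
    + destruct (IH ltac:(lia)
        (fun e => exists s, S s /\ e = vsub s (vscale (s i0 / s0 i0) s0))) as [ls' [Hls' Hsp']].
      { intros e [s [Ss ->]] i Hi. unfold vsub, vscale.
        destruct (Nat.eq_dec (proj1_sig i) d0) as [E|E].
        - assert (i = i0) as ->.
          { destruct i, i0; simpl in *; subst. f_equal. apply proof_irrelevance. }
          field. exact Hnz.
        - rewrite (HS s Ss i), (HS s0 Ss0 i) by lia. ring. }
      destruct (lift_list S s0 ls') as [ls'' [H1 H2]].
      { intros e He. destruct (Hls' e He) as [s [Ss ->]]. exists s, (s i0 / s0 i0). auto. }
      exists (s0 :: ls''). split.
      * intros x [<-|Hx]; auto.
      * intros x Sx.
        replace x with (vadd (vsub x (vscale (x i0 / s0 i0) s0)) (vscale (x i0 / s0 i0) s0)) by vext.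
        apply span_add.
        -- apply (span_trans (fun y => In y ls')); auto. apply Hsp'. exists x; auto.
        -- apply span_scale, span_in; left; reflexivity.
    + apply IH; [lia|]. intros s Ss i Hi. destruct (Nat.eq_dec (proj1_sig i) d0) as [E|E].
      * apply NNPP; intro Hne. apply Hno. exists s, i. auto.
      * apply HS; auto; lia.
Qed.

Lemma esup_cmp (A B : R -> Prop) (c : R) :
  (forall s, A s -> exists t, B t /\ s - c <= t) ->
  ereal_le (ereal_sub_R (esup A) c) (esup B).
Proof.
  intros H. unfold esup.
  destruct (excluded_middle_informative (exists x, A x)) as [HneA|HneA]; [|exact I].
  destruct (excluded_middle_informative (exists x, B x)) as [HneB|HneB].
  2:{ exfalso. destruct HneA as [x Hx]. destruct (H x Hx) as [t [Ht _]]. apply HneB; eauto. }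
  destruct (excluded_middle_informative (bound A)) as [HbA|HbA];
  destruct (excluded_middle_informative (bound B)) as [HbB|HbB].
  - destruct (completeness A HbA HneA) as [sa [Hua Hla]].
    destruct (completeness B HbB HneB) as [sb [Hub Hlb]]. simpl.
    assert (sa <= sb + c).
    { apply Hla. intros x Hx. destruct (H x Hx) as [t [Ht Hle]]. specialize (Hub t Ht). lra. }
    lra.
  - simpl. exact I.
  - exfalso. apply HbA. destruct HbB as [M HM]. exists (M + c). intros x Hx.
    destruct (H x Hx) as [t [Ht Hle]]. specialize (HM t Ht). lra.
  - simpl. exact I.
Qed.

Lemma ereal_sub0 e : ereal_sub_R e 0 = e.
Proof. destruct e; simpl; auto. rewrite Rminus_0_r; reflexivity. Qed.

Lemma round d n (Q : vec d -> Prop) (f : vec d -> vec n) (l : vec d -> R)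
  (C : vec n -> Prop) (L : vec d -> Prop)
  (HQ : convex_cone Q) (Hf : is_linear f) (Hl : is_linear_form l)
  (HC : convex_cone C) (HL : is_lattice L) (HQspan : forall v, span Q v) :
  forall ls, (forall x, In x ls -> L x /\ C (f x)) ->
  exists w c, Q w /\ forall p, span (fun y => In y ls) p ->
    exists k, C (f k) /\ L (vsub p k) /\ Q (vsub w k) /\ - c <= l (vsub w k).
Proof.
  pose proof HQ as [_ [QA QS]]. pose proof HC as [_ [CA CS]].
  pose proof (cone_zero Q HQ) as Q0. pose proof (cone_zero C HC) as C0.
  assert (V00 : vsub (@vzero d) vzero = vzero) by vext.
  induction ls as [|s ls IH]; intros Hls.
  - exists vzero, 0. split; auto. intros p Hp. apply span_nil in Hp. subst p. exists vzero.
    rewrite (lin_zero f Hf), V00, (linf_zero l Hl). repeat split; auto.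
    + apply lat_zero; auto.
    + lra.
  - destruct IH as [w' [c' [Hw' H']]]. { intros x Hx; apply Hls; right; auto. }
    destruct (Hls s (or_introl eq_refl)) as [Ls Ks].
    destruct (span_cone_dec Q (vscale (-1) s) HQ (HQspan _)) as [P [N [HP [HN HPN]]]].
    assert (Hsi : forall i, s i = N i - P i).
    { intro i. apply (f_equal (fun v => v i)) in HPN. unfold vscale, vsub in HPN. lra. }
    exists (vadd N w'), (c' + Rabs (l N) + Rabs (l P)). split; [apply QA; auto|].
    intros p Hp. destruct (span_cons_dec s ls p Hp) as [a [p' [Hp' ->]]].
    destruct (H' p' Hp') as [k' [Kk' [Lk' [Qk' Ck']]]].
    set (m := (up a - 1)%Z). set (t := a - IZR m).
    assert (Ht : 0 <= t <= 1).
    { destruct (archimed a). unfold t, m. rewrite minus_IZR. change (IZR 1) with 1. lra. }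
    exists (vadd (vscale t s) k'). destruct Hf as [fa fs].
    assert (EQ : vsub (vadd N w') (vadd (vscale t s) k') =
                 vadd (vadd (vscale (1 - t) N) (vscale t P)) (vsub w' k')).
    { apply functional_extensionality; intro i; unfold vadd, vsub, vscale; rewrite Hsi; ring. }
    split; [|split; [|split]].
    + rewrite fa, fs. apply CA; auto. apply CS; auto; lra.
    + replace (vsub (vadd (vscale a s) p') (vadd (vscale t s) k'))
        with (vadd (vscale (IZR m) s) (vsub p' k')) by (unfold t; vext).
      apply lat_add; auto. apply lat_scale; auto.
    + rewrite EQ. apply QA; auto. apply QA; apply QS; auto; lra.
    + rewrite EQ. destruct Hl as [la ls_]. rewrite !la, !ls_.
      pose proof (Rle_abs (l N)). pose proof (Rle_abs (- l N)). rewrite Rabs_Ropp in *.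
      pose proof (Rle_abs (l P)). pose proof (Rle_abs (- l P)). rewrite Rabs_Ropp in *.
      assert ((1 - t) * (l N + Rabs (l N)) >= 0) by (apply Rle_ge, Rmult_le_pos; lra).
      assert (t * (l P + Rabs (l P)) >= 0) by (apply Rle_ge, Rmult_le_pos; lra).
      assert ((1 - t) * Rabs (l N) <= Rabs (l N)) by nra.
      assert (t * Rabs (l P) <= Rabs (l P)) by nra.
      nra.
Qed.

Theorem proposition2p3 (d n : nat)
  (Q : vec d -> Prop) (f : vec d -> vec n) (l : vec d -> R)
  (C : vec n -> Prop) (L : vec d -> Prop)
  (HQ : convex_cone Q) (Hf : is_linear f) (Hl : is_linear_form l)
  (HC : convex_cone C) (HL : is_lattice L)
  (HQspan : forall v, span Q v)
  (Hfsurj : forall z : vec n, exists x, f x = z)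
  (Hspan : forall v, span (fun x => L x /\ C (f x)) v <-> span (fun x => C (f x)) v) :
  exists (y0 : vec n) (c : R),
    forall y : vec n,
      (exists r z, L r /\ C z /\ y = vadd (f r) z) ->
      ereal_le (ereal_sub_R (bval Q f l C (vsub y y0)) c) (bval' Q L f l C y) /\
      ereal_le (bval' Q L f l C y) (bval Q f l C y).
Proof.
  pose proof HQ as [_ [QA QS]]. pose proof HC as [_ [CA CS]].
  pose proof (cone_zero C HC) as C0.
  destruct (fin_span d d (le_n d) (fun x => L x /\ C (f x))) as [ls [Hls Hspls]].
  { intros s _ [i Hi'] Hi. simpl in Hi. lia. }
  destruct (round d n Q f l C L HQ Hf Hl HC HL HQspan ls Hls) as [w [c [Qw Hw]]].
  exists (f w), c. intros y [r0 [c0 [Lr0 [Cc0 Hy]]]].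
  split.
  - unfold bval, bval'. apply esup_cmp. intros s [x [Qx [Cx ->]]].
    assert (Hp : span (fun y => In y ls) (vsub (vadd x w) r0)).
    { apply (span_trans (fun x => L x /\ C (f x))); [intros; apply Hspls; auto|].
      apply Hspan.
      destruct (Hfsurj c0) as [a Ha].
      destruct (Hfsurj (vsub (vsub y (f w)) (f x))) as [b Hb].
      replace (vsub (vadd x w) r0)
        with (vadd (vadd a (vadd (vsub (vsub (vadd x w) r0) a) b)) (vscale (-1) b)) by vext.
      apply span_add; [apply span_add|apply span_scale]; apply span_in.
      - rewrite Ha; auto.
      - destruct Hf as [fa fs].
        rewrite fa, !(lin_sub f _ _ (conj fa fs)), fa, Ha, Hb, Hy.
        replace (vadd (vsub (vsub (vadd (f x) (f w)) (f r0)) c0)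
                   (vsub (vsub (vadd (f r0) c0) (f w)) (f x))) with (@vzero n) by vext.
        auto.
      - rewrite Hb; auto. }
    destruct (Hw _ Hp) as [k [Kk [Lk [Qk Ck]]]].
    exists (l (vadd x (vsub w k))). split.
    + exists (vadd x (vsub w k)). split; [apply QA; auto|]. split; [|split; [|reflexivity]].
      * replace (vadd x (vsub w k)) with (vadd r0 (vsub (vsub (vadd x w) r0) k)) by vext.
        apply lat_add; auto.
      * destruct Hf as [fa fs]. rewrite fa, (lin_sub f _ _ (conj fa fs)).
        replace (vsub y (vadd (f x) (vsub (f w) (f k))))
          with (vadd (vsub (vsub y (f w)) (f x)) (f k)) by vext.
        apply CA; auto.
    + destruct Hl as [la ls_]. rewrite la. lra.
  - unfold bval, bval'. rewrite <- (ereal_sub0 (esup _)). apply esup_cmp.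
    intros s [x [Qx [Lx [Cx ->]]]]. exists (l x). split; [|lra].
    exists x; auto.
Qed.
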